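(* Let $\mathcal{A}=\{1,\dots,N\}$, $\boldsymbol{\lambda}\in\mathbb{R}_+^N$, $\boldsymbol{\delta}\in\mathbb{R}^N$ with $\delta_i>0$, $B\in\mathbb{R}_+^{N\times N}$ with zero diagonal whose associated directed graph is weakly connected but not strongly connected, $\mathcal{S}\subset\mathbb{R}_+^N$ convex, $w:\mathbb{R}_+^N\to\mathbb{R}$ convex, $\mathbf{c}\in\mathbb{R}_+^N$, and $q_i:\mathbb{R}_+\to(0,1]$ decreasing, strictly convex, continuously differentiable. For $\mathbf{s}\in\mathcal{S}$ let $\bar{\mathbf{p}}^0(\mathbf{s}):=\bar{\mathbf{p}}(\mathbf{s})$ be the unique stable equilibrium of $\dot{\mathbf{p}}=(\mathbf{1}-\mathbf{p})\circ\mathbf{q}(\mathbf{s})\circ(\boldsymbol{\lambda}+B\mathbf{p})-\boldsymbol{\delta}\circ\mathbf{p}$, and for $\epsilon>0$ let $\bar{\mathbf{p}}^\epsilon(\mathbf{s})>\mathbf{0}$ be the unique strictly positive solution of $(\mathbf{1}-\mathbf{p})\circ(\boldsymbol{\lambda}+\epsilon\mathbf{1}+B\mathbf{p})-\mathbf{q}(\mathbf{s})^{-1}\circ\boldsymbol{\delta}\circ\mathbf{p}=\mathbf{0}$. Define $F^*_\epsilon:=\min_{\mathbf{s}\in\mathcal{S}}\big(w(\mathbf{s})+\mathbf{c}^{\mathsf T}\bar{\mathbf{p}}^\epsilon(\mathbf{s})\big)$ for $\epsilon\ge0$. Then $F^*_\epsilon$ is increasing in $\epsilon\ge0$.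
   Context: $\circ$ is the element-wise product; $\mathbf{q}(\mathbf{s})=(q_i(s_i))_i$ and $\mathbf{q}(\mathbf{s})^{-1}$ is its element-wise inverse. The associated graph has an edge $(j,i)$ iff $b_{i,j}>0$. $\mathbf{c}$ is the vector of loss rates of infected systems, and $F^*_0$ is the optimal average cost of the original (unperturbed) problem. *)

(* Defs.v *)
From HB Require Import structures.
From mathcomp Require Import all_boot all_order all_algebra.
From mathcomp Require Import all_classical all_reals.
From mathcomp Require Import ereal topology normedtype derive sequences.
Set Implicit Arguments. Unset Strict Implicit. Unset Printing Implicit Defensive.
Import Order.TTheory GRing.Theory Num.Theory.
Import numFieldNormedType.Exports.
Local Open Scope classical_set_scope.
Local Open Scope ring_scope.

Definition vec (R : realType) (N : nat) := 'I_N -> R.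

Definition nonneg_vec (R : realType) N (x : vec R N) := forall i, 0 <= x i.

Definition vadd (R : realType) N (x y : vec R N) : vec R N := fun i => x i + y i.
Definition vscale (R : realType) N (t : R) (x : vec R N) : vec R N := fun i => t * x i.

Definition mxv (R : realType) N (B : 'M[R]_N) (p : vec R N) : vec R N :=
  fun i => \sum_(j < N) B i j * p j.

Definition convex_subset (R : realType) N (S : set (vec R N)) :=
  forall x y t, S x -> S y -> 0 <= t <= 1 ->
    S (vadd (vscale t x) (vscale (1 - t) y)).

Definition convex_on_nonneg (R : realType) N (w : vec R N -> R) :=
  forall x y t, nonneg_vec x -> nonneg_vec y -> 0 <= t <= 1 ->
    w (vadd (vscale t x) (vscale (1 - t) y)) <= t * w x + (1 - t) * w y.

Definition admissible_q (R : realType) (q : R -> R) :=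
  [/\ (forall x, 0 <= x -> 0 < q x <= 1),
      (forall x y, 0 <= x -> x < y -> q y < q x),
      (forall x y t, 0 <= x -> 0 <= y -> x != y -> 0 < t < 1 ->
         q (t * x + (1 - t) * y) < t * q x + (1 - t) * q y),
      (forall x, 0 <= x -> derivable q x 1) &
      {within `[0, +oo[, continuous (derive1 q)}].

Definition edge (R : realType) N (B : 'M[R]_N) : rel 'I_N := fun j i => 0 < B i j.

Definition strongly_connected (R : realType) N (B : 'M[R]_N) :=
  forall i j : 'I_N, connect (edge B) i j.

Definition weakly_connected (R : realType) N (B : 'M[R]_N) :=
  forall i j : 'I_N, connect (fun a b => edge B a b || edge B b a) i j.

Definition qvec (R : realType) N (q : 'I_N -> R -> R) (s : vec R N) : vec R N :=
  fun i => q i (s i).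

Definition sis_field (R : realType) N (lam delta : vec R N) (B : 'M[R]_N)
  (q : 'I_N -> R -> R) (s : vec R N) (p : vec R N) : vec R N :=
  fun i => (1 - p i) * qvec q s i * (lam i + mxv B p i) - delta i * p i.

Definition in_unit_cube (R : realType) N (p : vec R N) := forall i, 0 <= p i <= 1.

Definition is_equilibrium (R : realType) N (f : vec R N -> vec R N) (pe : vec R N) :=
  in_unit_cube pe /\ forall i, f pe i = 0.

Definition ode_solution (R : realType) N (f : vec R N -> vec R N) (x : R -> vec R N) :=
  forall t : R, 0 <= t -> forall i, is_derive t (1 : R) (fun u => x u i) (f (x t) i).

Definition lyapunov_stable (R : realType) N (f : vec R N -> vec R N) (pe : vec R N) :=
  forall e : R, 0 < e -> exists2 d : R, 0 < d &
    forall x : R -> vec R N, ode_solution f x -> in_unit_cube (x 0) ->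
      (forall i, `|x 0 i - pe i| < d) ->
      forall t : R, 0 <= t -> forall i, `|x t i - pe i| < e.

Definition stable_equilibrium (R : realType) N (f : vec R N -> vec R N) (pe : vec R N) :=
  is_equilibrium f pe /\ lyapunov_stable f pe.

Definition perturbed_eq (R : realType) N (lam delta : vec R N) (B : 'M[R]_N)
  (q : 'I_N -> R -> R) (eps : R) (s : vec R N) (p : vec R N) :=
  forall i, (1 - p i) * (lam i + eps + mxv B p i) - (qvec q s i)^-1 * delta i * p i = 0.

Definition strictly_pos (R : realType) N (p : vec R N) := forall i, 0 < p i.

Definition Fstar (R : realType) N (S : set (vec R N)) (w : vec R N -> R) (c : vec R N)
  (pbar : R -> vec R N -> vec R N) (eps : R) : \bar R :=
  ereal_inf [set ((w s + \sum_(i < N) c i * pbar eps s i)%:E) | s in S].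

(* Main.v *)
Require Import Defs.
From mathcomp Require Import ring lra.
From HB Require Import structures.
From mathcomp Require Import all_boot all_order all_algebra.
From mathcomp Require Import all_classical all_reals.
From mathcomp Require Import ereal topology normedtype derive sequences.
Import Order.TTheory GRing.Theory Num.Theory.
Local Open Scope classical_set_scope.
Local Open Scope ring_scope.


Lemma core (R : realType) N (lam d Q : vec R N) (B : 'M[R]_N) (e1 e2 : R) (x y : vec R N) :
  nonneg_vec lam -> (forall i, 0 < d i) -> (forall i, 0 < Q i) ->
  (forall i j, 0 <= B i j) -> 0 <= e1 -> e1 <= e2 -> 0 < e2 ->
  (forall i, 0 <= x i <= 1) -> (forall i, 0 < y i) ->
  (forall i, Q i * (1 - x i) * (lam i + e1 + mxv B x i) = d i * x i) ->
  (forall i, Q i * (1 - y i) * (lam i + e2 + mxv B y i) = d i * y i) ->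
  forall j, x j <= y j.
Proof.
move=> hlam hd hQ hB he1 he12 he2 hx hy ex ey j.
rewrite leNgt; apply/negP => hj.
case: (@arg_maxP _ R _ j xpredT (fun k => x k / y k) isT) => i _ Hi.
set t := x i / y i.
have ht1 : 1 < t.
  apply: (lt_le_trans _ (Hi j isT)).
  by rewrite ltr_pdivlMr ?hy // mul1r.
have hxk : forall k, x k <= t * y k.
  by move=> k; have /= := Hi k isT; rewrite ler_pdivrMr ?hy // mulrC.
have hxi : x i = t * y i by rewrite /t divfK // gt_eqF ?hy.
have hBy : 0 <= mxv B y i by apply: sumr_ge0 => k _; rewrite mulr_ge0 // ltW.
have hBx : mxv B x i <= t * mxv B y i.
  rewrite /mxv mulr_sumr; apply: ler_sum => k _.
  by rewrite mulrCA; apply: ler_wpM2l => //; apply: hxk.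
set L2 := lam i + e2 + mxv B y i.
have hL2 : 0 < L2 by rewrite /L2; have := hlam i; lra.
have hL1 : lam i + e1 + mxv B x i <= t * L2.
  have : lam i + e2 <= t * (lam i + e2).
    by rewrite ler_peMl // ?ltW //; have := hlam i; lra.
  rewrite /L2 mulrDr; lra.
have hQi := hQ i; case/andP: (hx i) => hx0 hx1.
have h1 : Q i * (1 - x i) * (lam i + e1 + mxv B x i) <= Q i * (1 - x i) * (t * L2).
  by apply: ler_wpM2l => //; apply: mulr_ge0; lra.
have hK : 0 < t * Q i * L2 by apply: mulr_gt0 => //; apply: mulr_gt0 => //; lra.
have h2 : (t * Q i * L2) * (1 - y i) <= (t * Q i * L2) * (1 - x i).
  have -> : (t * Q i * L2) * (1 - y i) = t * (d i * y i) by rewrite -ey /L2; ring.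
  have -> : t * (d i * y i) = d i * x i by rewrite hxi; ring.
  rewrite -ex.
  apply: (le_trans h1); rewrite le_eqVlt; apply/orP; left; apply/eqP; ring.
rewrite ler_pM2l // in h2.
have : y i < x i by rewrite hxi ltr_pMl ?hy.
lra.
Qed.

Theorem corollary1 (R : realType) (N : nat)
  (lam delta c : vec R N) (B : 'M[R]_N) (S : set (vec R N))
  (w : vec R N -> R) (q : 'I_N -> R -> R)
  (pbar : R -> vec R N -> vec R N) :
  nonneg_vec lam ->
  (forall i, 0 < delta i) ->
  (forall i j, 0 <= B i j) ->
  (forall i, B i i = 0) ->
  weakly_connected B ->
  ~ strongly_connected B ->
  S `<=` @nonneg_vec R N ->
  convex_subset S ->
  convex_on_nonneg w ->
  nonneg_vec c ->
  (forall i, admissible_q (q i)) ->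
  (forall s, S s ->
     stable_equilibrium (sis_field lam delta B q s) (pbar 0 s) /\
     (forall p, stable_equilibrium (sis_field lam delta B q s) p -> p = pbar 0 s)) ->
  (forall eps s, 0 < eps -> S s ->
     strictly_pos (pbar eps s) /\ perturbed_eq lam delta B q eps s (pbar eps s) /\
     (forall p, strictly_pos p -> perturbed_eq lam delta B q eps s p -> p = pbar eps s)) ->
  forall eps1 eps2 : R, 0 <= eps1 -> eps1 <= eps2 ->
    (Fstar S w c pbar eps1 <= Fstar S w c pbar eps2)%E.
Proof.
move=> hlam hd hB _ _ _ hS _ _ hc hq H0 Hp eps1 eps2 he1 he12.
have [<-|hne] := eqVneq eps1 eps2; first exact: lexx.
have he12s : eps1 < eps2 by rewrite lt_neqAle hne.
have he2 : 0 < eps2 by lra.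
apply/ereal_infP => _ [s Ss <-].
apply: ge_ereal_inf; exists (w s + \sum_(i < N) c i * pbar eps1 s i)%:E; first by exists s.
rewrite lee_fin lerD2l; apply: ler_sum => i _; apply: ler_wpM2l; first exact: hc.
set Q := qvec q s.
have hQ : forall k, 0 < Q k.
  move=> k; rewrite /Q /qvec; case: (hq k) => h _ _ _ _.
  by case/andP: (h _ (hS _ Ss k)).
have conv : forall e p, perturbed_eq lam delta B q e s p ->
    forall k, Q k * (1 - p k) * (lam k + e + mxv B p k) = delta k * p k.
  move=> e p ep k; have := ep k; rewrite -/Q; move/eqP; rewrite subr_eq0 => /eqP E.
  by rewrite -mulrA E mulrA mulrA mulfV ?mul1r // (gt_eqF (hQ k)).
have [hy [ey _]] := Hp eps2 s he2 Ss.
apply: (@core R N lam delta Q B eps1 eps2 (pbar eps1 s) (pbar eps2 s) hlam hd hQ hB he1 he12 he2 _ hy _ (conv _ _ ey) i).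
  case: (eqVneq eps1 0) => [e0|e0].
    rewrite e0; have [[[hcube hf] _] _] := H0 s Ss; exact: hcube.
  have hx1 : 0 < eps1 by rewrite lt_neqAle eq_sym e0.
  have [hx [ex _]] := Hp eps1 s hx1 Ss.
  move=> k; rewrite ltW ?hx //=; rewrite leNgt; apply/negP => h.
  have := conv _ _ ex k.
  have hBx : 0 <= mxv B (pbar eps1 s) k
    by apply: sumr_ge0 => m _; rewrite mulr_ge0 // ltW ?hx.
  have hL : 0 < lam k + eps1 + mxv B (pbar eps1 s) k by have := hlam k; lra.
  have h1 : 0 < Q k * (pbar eps1 s k - 1) * (lam k + eps1 + mxv B (pbar eps1 s) k).
    by apply: mulr_gt0 => //; apply: mulr_gt0 => //; rewrite subr_gt0.
  have h2 : 0 < delta k * pbar eps1 s k by apply: mulr_gt0 => //; apply: hx.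
  move=> E.
  have : Q k * (1 - pbar eps1 s k) * (lam k + eps1 + mxv B (pbar eps1 s) k) =
    - (Q k * (pbar eps1 s k - 1) * (lam k + eps1 + mxv B (pbar eps1 s) k)) by ring.
  lra.
case: (eqVneq eps1 0) => [e0|e0].
  rewrite e0; have [[[hcube hf] _] _] := H0 s Ss.
  move=> k; have := hf k; rewrite /sis_field -/Q addr0.
  by move/eqP; rewrite subr_eq0 => /eqP <-; ring.
have hx1 : 0 < eps1 by rewrite lt_neqAle eq_sym e0.
have [hx [ex _]] := Hp eps1 s hx1 Ss.
exact: conv.
Qed.
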